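(* Consider the delayed bandit setting and Algorithm DEW described in the context, run with learning rate $\eta>0$ and a known bound $d_{\max}$ with $d_{\max}\ge \max_t d_t$. Then, against an oblivious adversary, its expected regret satisfies $$\bar{\mathcal R}_T\le \max\left\{\frac{\ln K}{\eta},\,4e\,d_{\max}\ln K\right\}+\eta\left(\frac{KTe}{2}+D\right),$$ where $D=\sum_{t=1}^T d_t$. In particular, if $T$ and $D$ are known and $\eta=\sqrt{\frac{\ln K}{KTe/2+D}}$ satisfies $\eta\le \frac{1}{4e\,d_{\max}}$, then $$\bar{\mathcal R}_T\le 2\sqrt{\left(\frac{KTe}{2}+D\right)\ln K}.$$
   Context: Setting: fix integers $K\ge 2$, $T\ge 1$, and write $[K]=\{1,\dots,K\}$. An oblivious adversary fixes in advance losses $\ell_t^a\in[0,1]$ for $t=1,2,\dots$, $a\in[K]$, and nonnegative integer delays $d_1,d_2,\dots$. In each round $t$ the learner picks (possibly at random) an action $A_t\in[K]$ and suffers loss $\ell_t^{A_t}$; at the end of round $t$ (after $A_t$ has been chosen) it observes the pairs $(s,\ell_s^{A_s})$ for all $s\le t$ with $s+d_s=t$. The expected regret is $\bar{\mathcal R}_T=\mathbb E\big[\sum_{t=1}^T\ell_t^{A_t}\big]-\min_{a\in[K]}\sum_{t=1}^T\ell_t^a$, the expectation being over the learner's randomization. $D=\sum_{t=1}^T d_t$. Algorithm DEW (delayed exponential weights) with inputs $\eta>0$ and $d_{\max}\ge\max_t d_t$: set $\eta'=\min\{\eta,(4e\,d_{\max})^{-1}\}$ and $w_0^a=1$ for all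 $a$. For $t=1,2,\dots$: let $p_t^a=w_{t-1}^a/\sum_b w_{t-1}^b$; draw $A_t\sim p_t$ and play it; at the end of round $t$, for every $s$ with $s+d_s=t$ form the estimates $\hat\ell_s^a=\ell_s^a\mathbb 1(a=A_s)/p_s^a$ for all $a$; update $w_t^a=w_{t-1}^a\exp\big(-\eta'\sum_{s:\,s+d_s=t}\hat\ell_s^a\big)$. *)

(* Defs.v *)
From Stdlib Require Import Reals Lra Lia List.
Import ListNotations.
Open Scope R_scope.

(* Conventions:
   - rounds are t = 1, 2, ...; actions are encoded as 0, ..., K-1
     (action a in [K] of the paper is encoded as a-1);
   - l t a : loss of action a at round t; d t : delay of round t;
   - a learner history h : list nat is the list [A_1; ...; A_{t-1}]
     of actions played so far. *)

Fixpoint sumR (n : nat) (f : nat -> R) : R :=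
  match n with
  | O => 0
  | S m => sumR m f + f m
  end.

(* eta' = min { eta, (4 e dmax)^{-1} }, with (4 e 0)^{-1} read as +infinity *)
Definition eta_prime (eta dmax : R) : R :=
  if Rle_dec (eta * (4 * exp 1 * dmax)) 1 then eta else / (4 * exp 1 * dmax).

(* Weight w_t^a after t completed rounds, given the action sequence A
   (A s = action at round s) and the list L = [p_1; ...; p_t] of the
   distributions used in rounds 1..t.  Feedback of round s is available at
   the end of round t iff s + d_s <= t. *)
Definition dew_weight (eta' : R) (l : nat -> nat -> R) (d : nat -> nat)
    (t : nat) (A : nat -> nat) (L : list (nat -> R)) (a : nat) : R :=
  exp (- eta' * sumR t (fun i =>
         let s := S i in
         if (s + d s <=? t)%nat then
           (if Nat.eqb (A s) a then l s a / nth i L (fun _ => 1) a else 0)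
         else 0)).

Definition dew_next (K : nat) (eta' : R) (l : nat -> nat -> R) (d : nat -> nat)
    (t : nat) (A : nat -> nat) (L : list (nat -> R)) : nat -> R :=
  fun a => dew_weight eta' l d t A L a /
           sumR K (fun b => dew_weight eta' l d t A L b).

Fixpoint dew_probs (K : nat) (eta' : R) (l : nat -> nat -> R) (d : nat -> nat)
    (n : nat) (A : nat -> nat) : list (nat -> R) :=
  match n with
  | O => []
  | S m => let L := dew_probs K eta' l d m A in
           L ++ [dew_next K eta' l d m A L]
  end.

(* Distribution p_t played by DEW at round t = length h + 1 after history h. *)
Definition dew_p (K : nat) (eta dmax : R) (l : nat -> nat -> R) (d : nat -> nat)
    (h : list nat) : nat -> R :=
  let eta' := eta_prime eta dmax in
  let A := fun s => nth (s - 1) h 0%nat in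
  dew_next K eta' l d (length h) A (dew_probs K eta' l d (length h) A).

(* Expected remaining loss of DEW over the next n rounds, starting after
   history h (expectation over the learner's sequential randomization). *)
Fixpoint dew_exp_loss (K : nat) (eta dmax : R) (l : nat -> nat -> R)
    (d : nat -> nat) (n : nat) (h : list nat) : R :=
  match n with
  | O => 0
  | S m => sumR K (fun a => dew_p K eta dmax l d h a *
             (l (S (length h)) a + dew_exp_loss K eta dmax l d m (h ++ [a])))
  end.

Definition dew_expected_loss (K T : nat) (eta dmax : R) (l : nat -> nat -> R)
    (d : nat -> nat) : R :=
  dew_exp_loss K eta dmax l d T [].

Definition cum_loss (T : nat) (l : nat -> nat -> R) (a : nat) : R :=
  sumR T (fun i => l (S i) a).

Definition total_delay (T : nat) (d : nat -> nat) : R :=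
  sumR T (fun i => INR (d (S i))).

(* Main.v *)
Require Import Defs.
From Stdlib Require Import Reals Lra Lia List FunctionalExtensionality Wf_nat.
Import ListNotations.
Open Scope R_scope.

Lemma sumR_ext n f g : (forall i, (i < n)%nat -> f i = g i) -> sumR n f = sumR n g.
Proof. induction n; simpl; intros H; auto. rewrite IHn by (intros; apply H; lia). rewrite H by lia. auto. Qed.

Lemma sumR_le n f g : (forall i, (i < n)%nat -> f i <= g i) -> sumR n f <= sumR n g.
Proof. induction n; simpl; intros H; [lra|]. specialize (IHn ltac:(intros; apply H; lia)). specialize (H n ltac:(lia)). lra. Qed.


Lemma sumR_zero n : sumR n (fun _ => 0) = 0.
Proof. induction n; simpl; auto. rewrite IHn; ring. Qed.

Lemma sumR_nonneg n f : (forall i, (i < n)%nat -> 0 <= f i) -> 0 <= sumR n f.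
Proof. intros H. rewrite <- (sumR_zero n). apply sumR_le; auto. Qed.

Lemma sumR_plus n f g : sumR n (fun i => f i + g i) = sumR n f + sumR n g.
Proof. induction n; simpl; [ring|]. rewrite IHn; ring. Qed.

Lemma sumR_minus n f g : sumR n (fun i => f i - g i) = sumR n f - sumR n g.
Proof. induction n; simpl; [ring|]. rewrite IHn; ring. Qed.

Lemma sumR_scal n c f : sumR n (fun i => c * f i) = c * sumR n f.
Proof. induction n; simpl; [ring|]. rewrite IHn; ring. Qed.

Lemma sumR_const n c : sumR n (fun _ => c) = INR n * c.
Proof. induction n; simpl sumR; [simpl; ring|]. rewrite IHn, S_INR; ring. Qed.

Lemma sumR_shift n f : sumR (S n) f = f 0%nat + sumR n (fun i => f (S i)).
Proof. induction n; simpl in *; [ring|]. rewrite IHn; ring. Qed.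

Lemma sumR_swap n m (f : nat -> nat -> R) :
  sumR n (fun i => sumR m (fun j => f i j)) = sumR m (fun j => sumR n (fun i => f i j)).
Proof. induction n; simpl. - rewrite sumR_zero; auto. - rewrite IHn, <- sumR_plus. auto. Qed.

Lemma sumR_single n a (x : nat -> R) :
  sumR n (fun b => if Nat.eqb a b then x b else 0) = if Nat.ltb a n then x a else 0.
Proof. induction n; simpl; auto. rewrite IHn.
  destruct (Nat.eqb_spec a n); destruct (Nat.ltb_spec a n); destruct (Nat.ltb_spec a (S n)); subst; try lia; ring. Qed.

Lemma sumR_le_term n f k : (forall i, (i < n)%nat -> 0 <= f i) -> (k < n)%nat -> f k <= sumR n f.
Proof. induction n; intros H Hk; [lia|]. simpl.
  destruct (Nat.eq_dec k n). - subst. assert (0 <= sumR n f) by (apply sumR_nonneg; intros; apply H; lia). lra.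
  - assert (f k <= sumR n f) by (apply IHn; [intros; apply H|]; lia). specialize (H n ltac:(lia)). lra. Qed.

Lemma count_ge n x : sumR n (fun i => if Rle_dec x (INR i) then 1 else 0) <= Rmax 0 (INR n - x).
Proof. induction n; simpl sumR.
 - simpl. apply Rmax_l.
 - rewrite S_INR. destruct (Rle_dec x (INR n)).
   + assert (Rmax 0 (INR n - x) = INR n - x) by (apply Rmax_right; lra).
     rewrite Rmax_right by lra. lra.
   + assert (Rmax 0 (INR n - x) = 0) by (apply Rmax_left; lra).
     pose proof (Rmax_l 0 (INR n + 1 - x)). lra. Qed.

Definition pp K et l d u A : nat -> R := dew_next K et l d u A (dew_probs K et l d u A).
Definition hat K et l d (A : nat -> nat) s b : R :=
  if Nat.eqb (A s) b then l s b / pp K et l d (s - 1) A b else 0.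
Definition Lobs K et l d u A b : R :=
  sumR u (fun i => if (S i + d (S i) <=? u)%nat then hat K et l d A (S i) b else 0).
Definition ew K et (L : nat -> R) b : R :=
  exp (- et * L b) / sumR K (fun c => exp (- et * L c)).

Lemma nth_probs K et l d A n i dflt : (i < n)%nat ->
  nth i (dew_probs K et l d n A) dflt = pp K et l d i A.
Proof.
  assert (Hl : forall n, length (dew_probs K et l d n A) = n).
  { induction n0; simpl; auto. rewrite length_app, IHn0; simpl; lia. }
  induction n; intros Hi; [lia|]. simpl.
  destruct (Nat.eq_dec i n).
  - subst. rewrite app_nth2 by (rewrite Hl; lia). rewrite Hl, Nat.sub_diag. reflexivity.
  - rewrite app_nth1 by (rewrite Hl; lia). apply IHn; lia.
Qed.

Lemma pp_eq K et l d u A b : pp K et l d u A b = ew K et (Lobs K et l d u A) b.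
Proof.
  unfold pp, dew_next, ew, dew_weight, Lobs.
  assert (E : forall c, sumR u (fun i : nat => let s := S i in
     if (s + d s <=? u)%nat then if Nat.eqb (A s) c then l s c / nth i (dew_probs K et l d u A) (fun _ : nat => 1) c else 0
     else 0) = sumR u (fun i => if (S i + d (S i) <=? u)%nat then hat K et l d A (S i) c else 0)).
  { intros c. apply sumR_ext. intros i Hi. simpl. unfold hat. rewrite nth_probs by auto.
    replace (S i - 1)%nat with i by lia. reflexivity. }
  rewrite E. f_equal. apply sumR_ext. intros. rewrite E. auto.
Qed.

Lemma sumR_exp_pos K et L : (1 <= K)%nat -> 0 < sumR K (fun c => exp (- et * L c)).
Proof. intros HK. destruct K; [lia|]. simpl.
  assert (0 <= sumR K (fun c => exp (- et * L c))) by (apply sumR_nonneg; intros; apply Rlt_le, exp_pos).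
  pose proof (exp_pos (- et * L K)). lra. Qed.

Lemma ew_pos K et L b : (1 <= K)%nat -> 0 < ew K et L b.
Proof. intros. unfold ew. apply Rdiv_lt_0_compat; [apply exp_pos|apply sumR_exp_pos; auto]. Qed.

Lemma ew_sum K et L : (1 <= K)%nat -> sumR K (ew K et L) = 1.
Proof. intros. unfold ew. unfold Rdiv.
  rewrite (sumR_ext K _ (fun c => / sumR K (fun c => exp (- et * L c)) * exp (- et * L c))) by (intros; ring).
  rewrite sumR_scal. field. apply Rgt_not_eq, sumR_exp_pos; auto. Qed.

Lemma ew_ext K et L L' b : (forall c, L c = L' c) -> ew K et L b = ew K et L' b.
Proof. intros H. unfold ew. rewrite H. f_equal. f_equal. apply functional_extensionality. intros. rewrite H; auto. Qed.

Lemma pp_pos K et l d u A b : (1 <= K)%nat -> 0 < pp K et l d u A b.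
Proof. intros. rewrite pp_eq. apply ew_pos; auto. Qed.

Lemma pp_sum K et l d u A : (1 <= K)%nat -> sumR K (pp K et l d u A) = 1.
Proof. intros. rewrite (sumR_ext K _ (ew K et (Lobs K et l d u A))) by (intros; apply pp_eq). apply ew_sum; auto. Qed.

Lemma ew_shift K et L L' D b : (1 <= K)%nat -> (forall c, L' c = L c + D c) ->
  ew K et L' b * sumR K (fun c => ew K et L c * exp (- et * D c)) = ew K et L b * exp (- et * D b).
Proof.
  intros HK H. unfold ew.
  rewrite (sumR_ext K (fun c => exp (- et * L c) / sumR K (fun c0 => exp (- et * L c0)) * exp (- et * D c))
     (fun c => / sumR K (fun c0 => exp (- et * L c0)) * exp (- et * L' c))).
  2:{ intros c _. rewrite H. replace (- et * (L c + D c)) with (- et * L c + - et * D c) by ring.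
      rewrite exp_plus. field. apply Rgt_not_eq, sumR_exp_pos; auto. }
  rewrite sumR_scal. rewrite H.
  replace (- et * (L b + D b)) with (- et * L b + - et * D b) by ring. rewrite exp_plus.
  pose proof (sumR_exp_pos K et L HK). pose proof (sumR_exp_pos K et L' HK).
  field. split; apply Rgt_not_eq; auto.
Qed.

Lemma exp_ge_1m y : 1 - y <= exp (- y).
Proof. pose proof (exp_ineq1_le (- y)). lra. Qed.

Lemma ew_shift_bounds K et L L' D b : (1 <= K)%nat -> 0 < et -> (forall c, L' c = L c + D c) ->
  (forall c, (c < K)%nat -> 0 <= D c) -> 0 <= D b ->
  ew K et L' b * (1 - et * sumR K (fun c => ew K et L c * D c)) <= ew K et L b
  /\ ew K et L b * exp (- et * D b) <= ew K et L' b.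
Proof.
  intros HK Het H HD HDb.
  pose proof (ew_shift K et L L' D b HK H) as E.
  set (Z := sumR K (fun c => ew K et L c * exp (- et * D c))) in *.
  assert (Zle : Z <= 1).
  { rewrite <- (ew_sum K et L HK). unfold Z. apply sumR_le. intros c Hc.
    pose proof (ew_pos K et L c HK). specialize (HD c Hc).
    assert (exp (- et * D c) <= 1). { rewrite <- exp_0. destruct (Req_dec (et * D c) 0).
      - replace (- et * D c) with 0 by lra. lra.
      - apply Rlt_le, exp_increasing. nra. }
    nra. }
  assert (Zge : 1 - et * sumR K (fun c => ew K et L c * D c) <= Z).
  { rewrite <- (ew_sum K et L HK) at 1. rewrite <- sumR_scal, <- sumR_minus. unfold Z. apply sumR_le.
    intros c Hc. pose proof (ew_pos K et L c HK). pose proof (exp_ge_1m (et * D c)).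
    replace (- et * D c) with (- (et * D c)) by ring. nra. }
  pose proof (ew_pos K et L' b HK). pose proof (ew_pos K et L b HK).
  assert (exp (- et * D b) <= 1). { rewrite <- exp_0. destruct (Req_dec (et * D b) 0).
      - replace (- et * D b) with 0 by lra. lra.
      - apply Rlt_le, exp_increasing. nra. }
  split; nra.
Qed.

Lemma pp_agree K et l d : forall u A A',
  (forall j, (1 <= j <= u)%nat -> (j + d j <= u)%nat -> A j = A' j) ->
  forall b, pp K et l d u A b = pp K et l d u A' b.
Proof.
  intros u. induction u as [u IH] using lt_wf_ind. intros A A' H b.
  rewrite !pp_eq. apply ew_ext. intros c. unfold Lobs. apply sumR_ext. intros i Hi.
  destruct (Nat.leb_spec (S i + d (S i)) u); auto.
  unfold hat. rewrite (H (S i)) by lia. replace (S i - 1)%nat with i by lia.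
  rewrite (IH i Hi A A'); auto. intros j Hj Hj'. apply H; lia.
Qed.

Lemma obs_split d w (h : nat -> R) :
  sumR (S w) (fun i => if (S i + d (S i) <=? S w)%nat then h i else 0) =
  sumR w (fun i => if (S i + d (S i) <=? w)%nat then h i else 0) +
  sumR (S w) (fun i => if (S i + d (S i) =? S w)%nat then h i else 0).
Proof.
  change (sumR (S w) ?f) with (sumR w f + f w).
  change (sumR (S w) (fun i => if (S i + d (S i) =? S w)%nat then h i else 0)) with
    (sumR w (fun i => if (S i + d (S i) =? S w)%nat then h i else 0) +
     (if (S w + d (S w) =? S w)%nat then h w else 0)).
  rewrite (sumR_ext w (fun i => if (S i + d (S i) <=? S w)%nat then h i else 0)
    (fun i => (if (S i + d (S i) <=? w)%nat then h i else 0) + (if (S i + d (S i) =? S w)%nat then h i else 0))).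
  2:{ intros i Hi. destruct (Nat.leb_spec (S i + d (S i)) (S w)); destruct (Nat.leb_spec (S i + d (S i)) w);
      destruct (Nat.eqb_spec (S i + d (S i)) (S w)); try lia; ring. }
  rewrite sumR_plus.
  destruct (Nat.leb_spec (S w + d (S w)) (S w)); destruct (Nat.eqb_spec (S w + d (S w)) (S w)); try lia; ring.
Qed.

Definition rho K et l d u A r : R := sumR K (fun c => pp K et l d u A c * hat K et l d A r c).

Lemma rho_eq K et l d u A r : rho K et l d u A r =
  if (A r <? K)%nat then pp K et l d u A (A r) * l r (A r) / pp K et l d (r - 1) A (A r) else 0.
Proof.
  unfold rho, hat.
  rewrite (sumR_ext K _ (fun c => if Nat.eqb (A r) c then pp K et l d u A c * l r c / pp K et l d (r - 1) A c else 0)).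
  2:{ intros c _. destruct (Nat.eqb (A r) c); unfold Rdiv; ring. }
  rewrite sumR_single. auto.
Qed.

Lemma rho_bound K et l d u A r M : (1 <= K)%nat -> 0 <= M ->
  ((A r < K)%nat -> 0 <= l r (A r) <= 1) ->
  ((A r < K)%nat -> pp K et l d u A (A r) <= M * pp K et l d (r - 1) A (A r)) ->
  0 <= rho K et l d u A r <= M.
Proof.
  intros HK HM Hl Hr. rewrite rho_eq. destruct (Nat.ltb_spec (A r) K); [|lra].
  specialize (Hl H). specialize (Hr H).
  pose proof (pp_pos K et l d u A (A r) HK). pose proof (pp_pos K et l d (r-1) A (A r) HK).
  split. - apply Rmult_le_pos; [nra|]. apply Rlt_le, Rinv_0_lt_compat; auto.
  - apply (Rmult_le_reg_r (pp K et l d (r - 1) A (A r))); auto. unfold Rdiv.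
    rewrite Rmult_assoc, Rinv_l by lra. nra.
Qed.

Lemma hat_nonneg K et l d A s c : (1 <= K)%nat -> (c < K)%nat -> 0 <= l s c -> 0 <= hat K et l d A s c.
Proof. intros HK Hc Hl. unfold hat. destruct (Nat.eqb (A s) c); [|lra].
  apply Rmult_le_pos; auto. apply Rlt_le, Rinv_0_lt_compat, pp_pos; auto. Qed.

Lemma one_step K et l d w A b : (1 <= K)%nat -> 0 < et -> (b < K)%nat ->
  (forall t c, (1 <= t)%nat -> (c < K)%nat -> 0 <= l t c) ->
  pp K et l d (S w) A b * (1 - et * sumR (S w) (fun i => if (S i + d (S i) =? S w)%nat then rho K et l d w A (S i) else 0))
  <= pp K et l d w A b.
Proof.
  intros HK Het Hb Hl.
  set (D := fun c => sumR (S w) (fun i => if (S i + d (S i) =? S w)%nat then hat K et l d A (S i) c else 0)).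
  assert (HD : forall c, (c < K)%nat -> 0 <= D c).
  { intros c Hc. apply sumR_nonneg. intros i _. destruct (_ =? _)%nat; [|lra]. apply hat_nonneg; auto. apply Hl; lia. }
  destruct (ew_shift_bounds K et (Lobs K et l d w A) (Lobs K et l d (S w) A) D b HK Het) as [H1 _]; auto.
  { intros c. unfold Lobs, D. apply obs_split. }
  rewrite !pp_eq.
  replace (sumR (S w) (fun i => if (S i + d (S i) =? S w)%nat then rho K et l d w A (S i) else 0))
    with (sumR K (fun c => ew K et (Lobs K et l d w A) c * D c)); auto.
  unfold D, rho. rewrite (sumR_ext K _ (fun c => sumR (S w) (fun i => if (S i + d (S i) =? S w)%nat then
     ew K et (Lobs K et l d w A) c * hat K et l d A (S i) c else 0))).
  2:{ intros c _. rewrite <- sumR_scal. apply sumR_ext. intros i _. destruct (_ =? _)%nat; ring. }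
  rewrite sumR_swap. apply sumR_ext. intros i _. destruct (_ =? _)%nat.
  - apply sumR_ext. intros c _. rewrite pp_eq; auto.
  - apply sumR_zero.
Qed.

Definition Nw (d : nat -> nat) u w : R :=
  sumR w (fun i => if (S i + d (S i) <=? w)%nat then (if (u <? S i + d (S i))%nat then 1 else 0) else 0).

Lemma Nw_u d u : Nw d u u = 0.
Proof. unfold Nw. transitivity (sumR u (fun _ => 0)); [|apply sumR_zero]. apply sumR_ext. intros i _.
  destruct (Nat.leb_spec (S i + d (S i)) u); destruct (Nat.ltb_spec u (S i + d (S i))); try lia; reflexivity. Qed.

Lemma Nw_step d u w : (u <= w)%nat ->
  Nw d u (S w) = Nw d u w + sumR (S w) (fun i => if (S i + d (S i) =? S w)%nat then 1 else 0).
Proof. intros Huw. unfold Nw. rewrite obs_split. f_equal. apply sumR_ext. intros i _.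
  destruct (Nat.eqb_spec (S i + d (S i)) (S w)); auto. destruct (Nat.ltb_spec u (S i + d (S i))); auto; lia. Qed.

Lemma arr_nonneg d w : 0 <= sumR (S w) (fun i => if (S i + d (S i) =? S w)%nat then 1 else 0).
Proof. apply sumR_nonneg. intros. destruct (_ =? _)%nat; lra. Qed.

Lemma Nw_mono d u w k : (u <= w)%nat -> Nw d u w <= Nw d u (w + k).
Proof. intros H. induction k. - rewrite Nat.add_0_r; lra.
  - replace (w + S k)%nat with (S (w + k)) by lia. rewrite Nw_step by lia. pose proof (arr_nonneg d (w+k)). lra. Qed.

Lemma Nw_bound d dmax u v : (forall t, (1 <= t)%nat -> INR (d t) <= dmax) ->
  (u < v)%nat -> (v <= u + d (S u))%nat -> Nw d u v <= 2 * dmax.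
Proof.
  intros Hd H1 H2. unfold Nw.
  apply Rle_trans with (sumR v (fun i => if Rle_dec (INR u - dmax) (INR i) then 1 else 0)).
  - apply sumR_le. intros i Hi. destruct (Nat.leb_spec (S i + d (S i)) v); [|destruct (Rle_dec _ _); lra].
    destruct (Nat.ltb_spec u (S i + d (S i))); [|destruct (Rle_dec _ _); lra].
    destruct (Rle_dec (INR u - dmax) (INR i)); [lra|]. exfalso. apply n.
    assert (INR u <= INR i + INR (d (S i))) by (rewrite <- plus_INR; apply le_INR; lia).
    pose proof (Hd (S i) ltac:(lia)). lra.
  - eapply Rle_trans. apply count_ge. apply Rmax_lub.
    + pose proof (Hd 1%nat ltac:(lia)). pose proof (pos_INR (d 1%nat)). lra.
    + assert (INR v <= INR u + INR (d (S u))) by (rewrite <- plus_INR; apply le_INR; lia).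
      pose proof (Hd (S u) ltac:(lia)). lra.
Qed.

Lemma exp_ratio_aux x p p' : 0 <= x <= 1/2 -> 0 <= p' -> p' * (1 - x) <= p -> p' <= p * exp (2 * x).
Proof. intros Hx Hp' H. pose proof (exp_ineq1_le (2 * x)).
  assert (A1 : p' <= p' * (1 - x) * (1 + 2 * x)) by (assert (0 <= x * (1 - 2*x)) by nra; nra).
  assert (A2 : p' * (1 - x) * (1 + 2 * x) <= p * (1 + 2 * x)) by (apply Rmult_le_compat_r; lra).
  assert (0 <= p) by nra. assert (p * (1 + 2 * x) <= p * exp (2 * x)) by (apply Rmult_le_compat_l; lra). lra. Qed.


Lemma Nw_nonneg d u w : 0 <= Nw d u w.
Proof. apply sumR_nonneg. intros. repeat destruct (_ <=? _)%nat; repeat destruct (_ <? _)%nat; lra. Qed.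

Lemma ratio K et l d dmax A : (1 <= K)%nat -> 0 < et ->
  (forall t c, (1 <= t)%nat -> (c < K)%nat -> 0 <= l t c <= 1) ->
  (forall t, (1 <= t)%nat -> INR (d t) <= dmax) ->
  et * (4 * exp 1 * dmax) <= 1 ->
  forall v u, (u < v)%nat -> (v <= u + d (S u))%nat -> forall b, (b < K)%nat ->
  pp K et l d v A b <= exp 1 * pp K et l d u A b.
Proof.
  intros HK Het Hl Hd Hc v. induction v as [v IH] using lt_wf_ind.
  intros u Huv Hvd b Hb.
  pose proof (Nw_bound d dmax u v Hd Huv Hvd) as HN.
  assert (He : 2 <= exp 1) by (pose proof (exp_ineq1_le 1); lra).
  assert (Inner : forall k, (u + k <= v)%nat ->
     pp K et l d (u + k) A b <= pp K et l d u A b * exp (2 * et * exp 1 * Nw d u (u + k))).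
  { induction k; intros Hk.
    - rewrite Nat.add_0_r, Nw_u. replace (2 * et * exp 1 * 0) with 0 by ring. rewrite exp_0. lra.
    - set (w := (u + k)%nat) in *. replace (u + S k)%nat with (S w) by (unfold w; lia).
      specialize (IHk ltac:(lia)).
      set (X := sumR (S w) (fun i => if (S i + d (S i) =? S w)%nat then rho K et l d w A (S i) else 0)).
      set (arr := sumR (S w) (fun i => if (S i + d (S i) =? S w)%nat then 1 else 0)).
      assert (HX : 0 <= X <= exp 1 * arr).
      { assert (T : forall i, (i < S w)%nat -> (S i + d (S i) = S w)%nat -> 0 <= rho K et l d w A (S i) <= exp 1).
        { intros i Hi Heq. apply (rho_bound K et l d w A (S i) (exp 1)); auto; [lra| intros; apply Hl; lia |].
          intros HA. replace (S i - 1)%nat with i by lia.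
          destruct (Nat.eq_dec i w).
          + rewrite e. pose proof (pp_pos K et l d w A (A (S w)) HK). nra.
          + apply IH; lia. }
        unfold X, arr. rewrite <- sumR_scal. split.
        - apply sumR_nonneg. intros i Hi. destruct (Nat.eqb_spec (S i + d (S i)) (S w)); [|lra].
          apply T; auto.
        - apply sumR_le. intros i Hi. destruct (Nat.eqb_spec (S i + d (S i)) (S w)); [|lra]. rewrite Rmult_1_r.
          apply T; auto. }
      pose proof (one_step K et l d w A b HK Het Hb ltac:(intros; apply Hl; auto)) as H1.
      fold X in H1.
      pose proof (Nw_step d u w ltac:(unfold w; lia)) as HS. fold arr in HS.
      pose proof (Nw_mono d u (S w) (v - S w) ltac:(lia)) as HM.
      replace (S w + (v - S w))%nat with v in HM by (unfold w in *; lia).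
      pose proof (Nw_nonneg d u w). pose proof (arr_nonneg d w). fold arr in H0.
      pose proof (pp_pos K et l d (S w) A b HK).
      assert (Hx : 0 <= et * X <= 1/2).
      { split. apply Rmult_le_pos; lra. assert (et * X <= et * (exp 1 * arr)) by (apply Rmult_le_compat_l; lra).
        assert (et * exp 1 * arr <= et * exp 1 * (2 * dmax)).
        { apply Rmult_le_compat_l. pose proof (exp_pos 1); nra. lra. }
        nra. }
      pose proof (exp_ratio_aux (et * X) (pp K et l d w A b) (pp K et l d (S w) A b) Hx ltac:(lra) H1) as Hst.
      rewrite HS.
      replace (2 * et * exp 1 * (Nw d u w + arr)) with (2 * et * exp 1 * Nw d u w + 2 * et * exp 1 * arr) by ring.
      rewrite exp_plus.
      assert (exp (2 * (et * X)) <= exp (2 * et * exp 1 * arr)).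
      { destruct (Req_dec (2 * (et * X)) (2 * et * exp 1 * arr)) as [E|E]; [rewrite E; lra|].
        apply Rlt_le, exp_increasing. assert (et * X <= et * (exp 1 * arr)) by (apply Rmult_le_compat_l; lra). lra. }
      pose proof (exp_pos (2 * (et * X))). pose proof (pp_pos K et l d u A b HK).
      pose proof (exp_pos (2 * et * exp 1 * Nw d u w)).
      apply Rle_trans with (pp K et l d w A b * exp (2 * (et * X))); [exact Hst|].
      apply Rle_trans with (pp K et l d u A b * exp (2 * et * exp 1 * Nw d u w) * exp (2 * (et * X))).
      apply Rmult_le_compat_r; lra.
      rewrite Rmult_assoc. apply Rmult_le_compat_l. lra. apply Rmult_le_compat_l; lra. }
  specialize (Inner (v - u)%nat ltac:(lia)). replace (u + (v - u))%nat with v in Inner by lia.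
  eapply Rle_trans; [apply Inner|]. rewrite Rmult_comm. apply Rmult_le_compat_r.
  apply Rlt_le, pp_pos; auto.
  destruct (Req_dec (2 * et * exp 1 * Nw d u v) 1) as [E|E]; [rewrite E; lra|].
  apply Rlt_le, exp_increasing. pose proof (exp_pos 1).
  assert (et * exp 1 * Nw d u v <= et * exp 1 * (2 * dmax)) by (apply Rmult_le_compat_l; nra). nra.
Qed.

Definition Lf K et l d (A : nat -> nat) n b : R := sumR n (fun i => hat K et l d A (S i) b).
Definition qq K et l d n A b : R := ew K et (Lf K et l d A n) b.
Definition Dout K et l d n A b : R :=
  sumR n (fun i => if (S i + d (S i) <=? n)%nat then 0 else hat K et l d A (S i) b).
Definition Yout K et l d n A : R :=
  sumR n (fun i => if (S i + d (S i) <=? n)%nat then 0 else rho K et l d n A (S i)).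

Lemma Lf_split K et l d n A c : Lf K et l d A n c = Lobs K et l d n A c + Dout K et l d n A c.
Proof. unfold Lf, Lobs, Dout. rewrite <- sumR_plus. apply sumR_ext. intros. destruct (_ <=? _)%nat; ring. Qed.

Lemma Yout_eq K et l d n A : Yout K et l d n A = sumR K (fun c => ew K et (Lobs K et l d n A) c * Dout K et l d n A c).
Proof.
  unfold Yout, Dout, rho.
  rewrite (sumR_ext K _ (fun c => sumR n (fun i => if (S i + d (S i) <=? n)%nat then 0 else
     ew K et (Lobs K et l d n A) c * hat K et l d A (S i) c))).
  2:{ intros c _. rewrite <- sumR_scal. apply sumR_ext. intros i _. destruct (_ <=? _)%nat; ring. }
  rewrite sumR_swap. apply sumR_ext. intros i _. destruct (_ <=? _)%nat.
  - symmetry. apply sumR_zero.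
  - apply sumR_ext. intros c _. rewrite pp_eq; auto.
Qed.



Lemma Yout_bound K et l d dmax n A : (1 <= K)%nat -> 0 < et ->
  (forall t c, (1 <= t)%nat -> (c < K)%nat -> 0 <= l t c <= 1) ->
  (forall t, (1 <= t)%nat -> INR (d t) <= dmax) ->
  et * (4 * exp 1 * dmax) <= 1 ->
  0 <= Yout K et l d n A <= exp 1 * dmax.
Proof.
  intros HK Het Hl Hd Hc.
  assert (T : forall i, (i < n)%nat -> (n < S i + d (S i))%nat -> 0 <= rho K et l d n A (S i) <= exp 1).
  { intros i Hi Hi'. apply rho_bound; auto. pose proof (exp_pos 1); lra. intros; apply Hl; lia.
    intros HA. replace (S i - 1)%nat with i by lia. apply (ratio K et l d dmax); auto; lia. }
  unfold Yout. split.
  - apply sumR_nonneg. intros i Hi. destruct (Nat.leb_spec (S i + d (S i)) n); [lra|]. apply T; auto.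
  - apply Rle_trans with (sumR n (fun i => exp 1 * (if Rle_dec (INR n - dmax) (INR i) then 1 else 0))).
    + apply sumR_le. intros i Hi. destruct (Nat.leb_spec (S i + d (S i)) n).
      * destruct (Rle_dec _ _); pose proof (exp_pos 1); lra.
      * destruct (Rle_dec (INR n - dmax) (INR i)).
        -- rewrite Rmult_1_r. apply T; auto.
        -- exfalso. apply n0. assert (INR n <= INR i + INR (d (S i))) by (rewrite <- plus_INR; apply le_INR; lia).
           pose proof (Hd (S i) ltac:(lia)). lra.
    + rewrite sumR_scal. apply Rmult_le_compat_l. pose proof (exp_pos 1); lra.
      eapply Rle_trans. apply count_ge. apply Rmax_lub. pose proof (Hd 1%nat ltac:(lia)). pose proof (pos_INR (d 1%nat)). lra. lra.
Qed.

Lemma Dout_nonneg K et l d n A c : (1 <= K)%nat -> (c < K)%nat ->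
  (forall t c, (1 <= t)%nat -> (c < K)%nat -> 0 <= l t c <= 1) -> 0 <= Dout K et l d n A c.
Proof. intros HK Hc Hl. apply sumR_nonneg. intros i _. destruct (_ <=? _)%nat; [lra|]. apply hat_nonneg; auto. apply Hl; lia. Qed.

Lemma qq_ratio K et l d dmax n A b : (1 <= K)%nat -> 0 < et -> (b < K)%nat ->
  (forall t c, (1 <= t)%nat -> (c < K)%nat -> 0 <= l t c <= 1) ->
  (forall t, (1 <= t)%nat -> INR (d t) <= dmax) ->
  et * (4 * exp 1 * dmax) <= 1 ->
  qq K et l d n A b <= exp 1 * pp K et l d n A b.
Proof.
  intros HK Het Hb Hl Hd Hc.
  destruct (ew_shift_bounds K et (Lobs K et l d n A) (Lf K et l d A n) (Dout K et l d n A) b HK Het) as [H1 _].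
  - apply Lf_split.
  - intros; apply Dout_nonneg; auto.
  - apply Dout_nonneg; auto.
  - rewrite <- Yout_eq in H1. rewrite <- pp_eq in H1. fold (qq K et l d n A b) in H1.
    pose proof (Yout_bound K et l d dmax n A HK Het Hl Hd Hc).
    assert (et * Yout K et l d n A <= 1/4).
    { assert (et * Yout K et l d n A <= et * (exp 1 * dmax)) by (apply Rmult_le_compat_l; lra). lra. }
    pose proof (ew_pos K et (Lf K et l d A n) b HK). fold (qq K et l d n A b) in H2.
    assert (2 <= exp 1) by (pose proof (exp_ineq1_le 1); lra).
    pose proof (pp_pos K et l d n A b HK).
    assert (0 <= et * Yout K et l d n A) by (apply Rmult_le_pos; lra).
    assert (qq K et l d n A b * (3/4) <= qq K et l d n A b * (1 - et * Yout K et l d n A)) by (apply Rmult_le_compat_l; lra).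
    nra.
Qed.

Lemma drift K et l d n A : (1 <= K)%nat -> 0 < et ->
  (forall t c, (1 <= t)%nat -> (c < K)%nat -> 0 <= l t c <= 1) ->
  sumR K (fun b => (pp K et l d n A b - qq K et l d n A b) * l (S n) b) <= et * Yout K et l d n A.
Proof.
  intros HK Het Hl. pose proof Hl as Hl0. rewrite Yout_eq, <- sumR_scal. apply sumR_le. intros b Hb.
  destruct (ew_shift_bounds K et (Lobs K et l d n A) (Lf K et l d A n) (Dout K et l d n A) b HK Het) as [_ H2].
  - apply Lf_split.
  - intros; apply Dout_nonneg; auto.
  - apply Dout_nonneg; auto.
  - rewrite <- pp_eq in *. fold (qq K et l d n A b) in H2.
    pose proof (exp_ge_1m (et * Dout K et l d n A b)).
    replace (- (et * Dout K et l d n A b)) with (- et * Dout K et l d n A b) in H by ring.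
    pose proof (pp_pos K et l d n A b HK). specialize (Hl (S n) b ltac:(lia) Hb).
    assert (pp K et l d n A b - qq K et l d n A b <= et * (pp K et l d n A b * Dout K et l d n A b)) by nra.
    pose proof (Dout_nonneg K et l d n A b HK Hb Hl0).
    assert (0 <= et * (pp K et l d n A b * Dout K et l d n A b)) by (apply Rmult_le_pos; [lra|apply Rmult_le_pos; lra]).
    destruct (Rle_dec 0 (pp K et l d n A b - qq K et l d n A b)).
    + assert ((pp K et l d n A b - qq K et l d n A b) * l (S n) b <= (pp K et l d n A b - qq K et l d n A b) * 1)
        by (apply Rmult_le_compat_l; lra). lra.
    + assert ((pp K et l d n A b - qq K et l d n A b) * l (S n) b <= 0) by nra. lra.
Qed.

Fixpoint Ex (K : nat) (P : list nat -> nat -> R) (n : nat) (h : list nat) (F : list nat -> R) : R :=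
  match n with
  | O => F h
  | S m => sumR K (fun a => P h a * Ex K P m (h ++ [a]) F)
  end.

Lemma Ex_ext K P n h F G : (forall rest, length rest = n -> F (h ++ rest) = G (h ++ rest)) ->
  Ex K P n h F = Ex K P n h G.
Proof. revert h. induction n; intros h H; simpl.
  - specialize (H [] eq_refl). rewrite app_nil_r in H. auto.
  - apply sumR_ext. intros a _. f_equal. apply IHn. intros rest Hr. rewrite <- app_assoc. apply H. simpl; lia. Qed.

Lemma Ex_le K P n h F G : (forall h a, (a < K)%nat -> 0 <= P h a) ->
  (forall rest, length rest = n -> F (h ++ rest) <= G (h ++ rest)) ->
  Ex K P n h F <= Ex K P n h G.
Proof. intros HP. revert h. induction n; intros h H; simpl.
  - specialize (H [] eq_refl). rewrite app_nil_r in H. auto.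
  - apply sumR_le. intros a Ha. apply Rmult_le_compat_l; auto. apply IHn. intros rest Hr. rewrite <- app_assoc. apply H. simpl; lia. Qed.

Lemma Ex_const K P n h c : (forall h, sumR K (P h) = 1) -> Ex K P n h (fun _ => c) = c.
Proof. intros HS. revert h. induction n; intros h; simpl; auto.
  rewrite (sumR_ext K _ (fun a => c * P h a)) by (intros; rewrite IHn; ring). rewrite sumR_scal, HS. ring. Qed.

Lemma Ex_plus K P n h F G : Ex K P n h (fun g => F g + G g) = Ex K P n h F + Ex K P n h G.
Proof. revert h. induction n; intros h; simpl; auto. rewrite <- sumR_plus. apply sumR_ext. intros. rewrite IHn. ring. Qed.

Lemma Ex_scal K P n h c F : Ex K P n h (fun g => c * F g) = c * Ex K P n h F.
Proof. revert h. induction n; intros h; simpl; auto. rewrite <- sumR_scal. apply sumR_ext. intros. rewrite IHn. ring. Qed.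

Lemma Ex_sumR K P n h N (F : nat -> list nat -> R) :
  Ex K P n h (fun g => sumR N (fun i => F i g)) = sumR N (fun i => Ex K P n h (F i)).
Proof. induction N; simpl.
  - transitivity (Ex K P n h (fun _ => 0 * 0)). apply Ex_ext; intros; simpl; ring. rewrite Ex_scal. ring.
  - rewrite Ex_plus, IHN. auto. Qed.

Lemma Ex_tower K P n m h F : Ex K P (n + m) h F = Ex K P n h (fun g => Ex K P m g F).
Proof. revert h. induction n; intros h; simpl; auto. apply sumR_ext. intros. rewrite IHn. auto. Qed.

Lemma Ex_stable K P n h k F : (forall h, sumR K (P h) = 1) ->
  (forall g, (k <= length g)%nat -> forall a, F (g ++ [a]) = F g) -> (k <= length h)%nat -> Ex K P n h F = F h.
Proof. intros HS HF. revert h. induction n; intros h Hh; simpl; auto.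
  rewrite (sumR_ext K _ (fun a => F h * P h a)). rewrite sumR_scal, HS; ring.
  intros a _. rewrite IHn. rewrite HF; auto; ring. rewrite length_app; simpl; lia. Qed.

Lemma Ex_cond K P T n0 F G : (forall h a, (a < K)%nat -> 0 <= P h a) -> (forall h, sumR K (P h) = 1) ->
  (n0 < T)%nat ->
  (forall g, (S n0 <= length g)%nat -> forall a, F (g ++ [a]) = F g) ->
  (forall g, (n0 <= length g)%nat -> forall a, G (g ++ [a]) = G g) ->
  (forall h, length h = n0 -> sumR K (fun b => P h b * F (h ++ [b])) <= G h) ->
  Ex K P T [] F <= Ex K P T [] G.
Proof.
  intros HP HS HT HF HG H.
  replace T with (n0 + S (T - S n0))%nat by lia. rewrite !Ex_tower.
  apply Ex_le; auto. intros rest Hr. change ([] ++ rest) with rest.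
  rewrite (Ex_stable K P (S (T - S n0)) rest n0 G); auto; [|lia]. simpl Ex.
  eapply Rle_trans; [|apply H; auto]. right. apply sumR_ext. intros b _. f_equal.
  apply (Ex_stable K P _ _ (S n0)); auto. rewrite length_app; simpl; lia.
Qed.

Lemma Ex_cond_eq K P T n0 F G : (forall h a, (a < K)%nat -> 0 <= P h a) -> (forall h, sumR K (P h) = 1) ->
  (n0 < T)%nat ->
  (forall g, (S n0 <= length g)%nat -> forall a, F (g ++ [a]) = F g) ->
  (forall g, (n0 <= length g)%nat -> forall a, G (g ++ [a]) = G g) ->
  (forall h, length h = n0 -> sumR K (fun b => P h b * F (h ++ [b])) = G h) ->
  Ex K P T [] F = Ex K P T [] G.
Proof.
  intros HP HS HT HF HG H.
  replace T with (n0 + S (T - S n0))%nat by lia. rewrite !Ex_tower.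
  apply Ex_ext. intros rest Hr. change ([] ++ rest) with rest.
  rewrite (Ex_stable K P (S (T - S n0)) rest n0 G); auto; [|lia]. simpl Ex.
  rewrite <- H; auto. apply sumR_ext. intros b _. f_equal.
  apply (Ex_stable K P _ _ (S n0)); auto. rewrite length_app; simpl; lia.
Qed.

Lemma Ex_swap K P n h1 h2 F G :
  (forall rest, (length rest < n)%nat -> forall a, (a < K)%nat -> P (h1 ++ rest) a = P (h2 ++ rest) a) ->
  (forall rest, length rest = n -> F (h1 ++ rest) = G (h2 ++ rest)) ->
  Ex K P n h1 F = Ex K P n h2 G.
Proof. revert h1 h2. induction n; intros h1 h2 HP H; simpl.
  - specialize (H [] eq_refl). rewrite !app_nil_r in H. auto.
  - apply sumR_ext. intros a Ha. f_equal.
    + specialize (HP [] ltac:(simpl; lia) a Ha). rewrite !app_nil_r in HP. auto.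
    + apply IHn.
      * intros rest Hr b Hb. rewrite <- !app_assoc. apply HP; simpl; auto; lia.
      * intros rest Hr. rewrite <- !app_assoc. apply H. simpl; lia. Qed.

Definition Aof (g : list nat) : nat -> nat := fun s => nth (s - 1) g 0%nat.
Definition PP K et l d (h : list nat) a : R := pp K et l d (length h) (Aof h) a.

Lemma dew_p_PP K eta dmax l d h : dew_p K eta dmax l d h = PP K (eta_prime eta dmax) l d h.
Proof. reflexivity. Qed.

Lemma Aof_prefix h rest j : (1 <= j <= length h)%nat -> Aof (h ++ rest) j = Aof h j.
Proof. intros H. unfold Aof. apply app_nth1. lia. Qed.

Lemma pp_prefix K et l d u h rest b : (u <= length h)%nat ->
  pp K et l d u (Aof (h ++ rest)) b = pp K et l d u (Aof h) b.
Proof. intros H. apply pp_agree. intros j Hj _. apply Aof_prefix. lia. Qed.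

Lemma hat_prefix K et l d s h rest c : (1 <= s <= length h)%nat ->
  hat K et l d (Aof (h ++ rest)) s c = hat K et l d (Aof h) s c.
Proof. intros H. unfold hat. rewrite Aof_prefix by lia. rewrite pp_prefix by lia. auto. Qed.

Lemma Lf_prefix K et l d n h rest c : (n <= length h)%nat ->
  Lf K et l d (Aof (h ++ rest)) n c = Lf K et l d (Aof h) n c.
Proof. intros H. unfold Lf. apply sumR_ext. intros i Hi. apply hat_prefix. lia. Qed.

Lemma qq_prefix K et l d n h rest c : (n <= length h)%nat ->
  qq K et l d n (Aof (h ++ rest)) c = qq K et l d n (Aof h) c.
Proof. intros H. unfold qq. apply ew_ext. intros. apply Lf_prefix; auto. Qed.

Lemma rho_prefix K et l d n h rest r : (1 <= r <= n)%nat -> (n <= length h)%nat ->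
  rho K et l d n (Aof (h ++ rest)) r = rho K et l d n (Aof h) r.
Proof. intros H1 H2. unfold rho. apply sumR_ext. intros c _. rewrite pp_prefix, hat_prefix; auto. lia. Qed.

Lemma Aof_last h b rest : Aof (h ++ b :: rest) (S (length h)) = b.
Proof. unfold Aof. replace (S (length h) - 1)%nat with (length h) by lia. rewrite app_nth2 by lia.
  rewrite Nat.sub_diag. auto. Qed.

Lemma hat_last K et l d h b rest c :
  hat K et l d (Aof (h ++ b :: rest)) (S (length h)) c =
  if Nat.eqb b c then l (S (length h)) c / pp K et l d (length h) (Aof h) c else 0.
Proof. unfold hat. rewrite Aof_last. replace (S (length h) - 1)%nat with (length h) by lia.
  rewrite pp_prefix by lia. auto. Qed.

Lemma PP_nonneg K et l d h a : (1 <= K)%nat -> 0 <= PP K et l d h a.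
Proof. intros. apply Rlt_le, pp_pos; auto. Qed.

Lemma PP_sum K et l d h : (1 <= K)%nat -> sumR K (PP K et l d h) = 1.
Proof. intros. apply pp_sum; auto. Qed.

Lemma exp_loss_Ex K eta dmax l d n h : (1 <= K)%nat ->
  dew_exp_loss K eta dmax l d n h =
  Ex K (PP K (eta_prime eta dmax) l d) n h (fun g => sumR n (fun i => l (S (length h + i)) (nth (length h + i) g 0%nat))).
Proof.
  intros HK. revert h. induction n; intros h; [reflexivity|]. cbn [Ex dew_exp_loss].
  apply sumR_ext. intros a _. rewrite dew_p_PP. f_equal. rewrite IHn.
  rewrite <- (Ex_const K (PP K (eta_prime eta dmax) l d) n (h ++ [a]) (l (S (length h)) a)) at 1
    by (intros; apply PP_sum; auto).
  rewrite <- Ex_plus. apply Ex_ext. intros rest Hr.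
  rewrite sumR_shift. rewrite Nat.add_0_r.
  rewrite <- app_assoc. simpl app.
  replace (nth (length h) (h ++ a :: rest) 0%nat) with a by (rewrite app_nth2, Nat.sub_diag by lia; auto).
  f_equal. rewrite length_app. simpl length. apply sumR_ext. intros i _.
  replace (length h + S i)%nat with (length h + 1 + i)%nat by lia. auto.
Qed.

Lemma cond_single K (p w f : nat -> R) : (forall c, (c < K)%nat -> 0 < p c) ->
  sumR K (fun b => p b * sumR K (fun c => w c * (if Nat.eqb b c then f c / p c else 0))) = sumR K (fun c => w c * f c).
Proof.
  intros Hp. apply sumR_ext. intros b Hb.
  rewrite (sumR_ext K _ (fun c => if Nat.eqb b c then w c * f c / p c else 0)).
  2:{ intros c _. destruct (Nat.eqb b c); unfold Rdiv; ring. }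
  rewrite sumR_single. destruct (Nat.ltb_spec b K); [|lia]. specialize (Hp b Hb). field. lra.
Qed.



Lemma stable_pp K et l d n g a b : (n <= length g)%nat -> pp K et l d n (Aof (g ++ [a])) b = pp K et l d n (Aof g) b.
Proof. intros; apply pp_prefix; auto. Qed.

Lemma E_loss K et l d T n : (1 <= K)%nat -> (n < T)%nat ->
  Ex K (PP K et l d) T [] (fun g => l (S n) (nth n g 0%nat)) =
  Ex K (PP K et l d) T [] (fun g => sumR K (fun b => pp K et l d n (Aof g) b * l (S n) b)).
Proof.
  intros HK HT. apply (Ex_cond_eq K _ T n); auto.
  - intros; apply PP_nonneg; auto.
  - intros; apply PP_sum; auto.
  - intros g Hg a. rewrite app_nth1 by lia. auto.
  - intros g Hg a. apply sumR_ext. intros. rewrite pp_prefix; auto.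
  - intros h Hh. subst n. apply sumR_ext. intros b _. unfold PP.
    rewrite app_nth2, Nat.sub_diag by lia. auto.
Qed.

Lemma E_qq K et l d T n : (1 <= K)%nat -> (n < T)%nat ->
  Ex K (PP K et l d) T [] (fun g => sumR K (fun c => qq K et l d n (Aof g) c * hat K et l d (Aof g) (S n) c)) =
  Ex K (PP K et l d) T [] (fun g => sumR K (fun c => qq K et l d n (Aof g) c * l (S n) c)).
Proof.
  intros HK HT. apply (Ex_cond_eq K _ T n); auto.
  - intros; apply PP_nonneg; auto.
  - intros; apply PP_sum; auto.
  - intros g Hg a. apply sumR_ext. intros. rewrite qq_prefix, hat_prefix by lia. auto.
  - intros g Hg a. apply sumR_ext. intros. rewrite qq_prefix; auto.
  - intros h Hh. subst n. unfold PP.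
    rewrite <- (cond_single K (pp K et l d (length h) (Aof h)) (qq K et l d (length h) (Aof h)) (l (S (length h))))
      by (intros; apply pp_pos; auto).
    apply sumR_ext. intros b _. f_equal. apply sumR_ext. intros c _.
    rewrite qq_prefix by lia. f_equal. apply hat_last.
Qed.

Lemma E_hat K et l d T n a : (1 <= K)%nat -> (n < T)%nat -> (a < K)%nat ->
  Ex K (PP K et l d) T [] (fun g => hat K et l d (Aof g) (S n) a) = l (S n) a.
Proof.
  intros HK HT Ha.
  rewrite (Ex_cond_eq K _ T n _ (fun _ => l (S n) a)); auto.
  - apply Ex_const. intros; apply PP_sum; auto.
  - intros; apply PP_nonneg; auto.
  - intros; apply PP_sum; auto.
  - intros g Hg b. rewrite hat_prefix by lia. auto.
  - intros h Hh. subst n. unfold PP.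
    rewrite (sumR_ext K _ (fun b => if Nat.eqb a b then pp K et l d (length h) (Aof h) b * (l (S (length h)) b / pp K et l d (length h) (Aof h) b) else 0)).
    + rewrite sumR_single. destruct (Nat.ltb_spec a K); [|lia]. pose proof (pp_pos K et l d (length h) (Aof h) a HK). field. lra.
    + intros b _. rewrite hat_last. destruct (Nat.eqb_spec b a); destruct (Nat.eqb_spec a b); subst; try lia; try ring.
Qed.

Lemma E_var K et l d dmax T n : (1 <= K)%nat -> 0 < et -> (n < T)%nat ->
  (forall t c, (1 <= t)%nat -> (c < K)%nat -> 0 <= l t c <= 1) ->
  (forall t, (1 <= t)%nat -> INR (d t) <= dmax) ->
  et * (4 * exp 1 * dmax) <= 1 ->
  Ex K (PP K et l d) T [] (fun g => sumR K (fun c => qq K et l d n (Aof g) c * (hat K et l d (Aof g) (S n) c) ^ 2))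
  <= INR K * exp 1.
Proof.
  intros HK Het HT Hl Hd Hc.
  eapply Rle_trans.
  apply (Ex_cond K _ T n _ (fun g => sumR K (fun c => qq K et l d n (Aof g) c * (l (S n) c ^ 2 / pp K et l d n (Aof g) c)))); auto.
  - intros; apply PP_nonneg; auto.
  - intros; apply PP_sum; auto.
  - intros g Hg a. apply sumR_ext. intros. rewrite qq_prefix, hat_prefix by lia. auto.
  - intros g Hg a. apply sumR_ext. intros. rewrite qq_prefix, pp_prefix; auto.
  - intros h Hh. subst n. unfold PP. right.
    rewrite <- (cond_single K (pp K et l d (length h) (Aof h)) (qq K et l d (length h) (Aof h)) (fun c => l (S (length h)) c ^ 2 / pp K et l d (length h) (Aof h) c))
      by (intros; apply pp_pos; auto).
    apply sumR_ext. intros b _. f_equal. apply sumR_ext. intros c _.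
    rewrite qq_prefix by lia. f_equal. rewrite hat_last. destruct (Nat.eqb b c); [|ring].
    pose proof (pp_pos K et l d (length h) (Aof h) c HK). field. lra.
  - rewrite <- (Ex_const K (PP K et l d) T [] (INR K * exp 1)) by (intros; apply PP_sum; auto).
    apply Ex_le. intros; apply PP_nonneg; auto. intros rest _.
    rewrite <- sumR_const. apply sumR_le. intros c Hcc.
    pose proof (qq_ratio K et l d dmax n (Aof ([] ++ rest)) c HK Het Hcc Hl Hd Hc).
    pose proof (pp_pos K et l d n (Aof ([] ++ rest)) c HK).
    pose proof (ew_pos K et (Lf K et l d (Aof ([] ++ rest)) n) c HK). fold (qq K et l d n (Aof ([] ++ rest)) c) in H1.
    specialize (Hl (S n) c ltac:(lia) Hcc).
    set (q := qq K et l d n (Aof ([] ++ rest)) c) in *. set (p := pp K et l d n (Aof ([] ++ rest)) c) in *.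
    set (x := l (S n) c) in *.
    replace (q * (x ^ 2 / p)) with ((q / p) * x ^ 2) by (field; lra).
    assert (q / p <= exp 1) by (apply Rmult_le_reg_r with p; auto; unfold Rdiv; rewrite Rmult_assoc, Rinv_l by lra; lra).
    assert (x ^ 2 <= 1) by nra. assert (0 <= q / p) by (apply Rlt_le, Rdiv_lt_0_compat; lra).
    pose proof (exp_pos 1). nra.
Qed.

Lemma Aof_swap h b b' rest j : j <> S (length h) -> (1 <= j)%nat ->
  Aof (h ++ b :: rest) j = Aof (h ++ b' :: rest) j.
Proof. intros H1 H2. unfold Aof. destruct (Nat.ltb_spec (j - 1) (length h)).
  - rewrite !app_nth1 by lia. auto.
  - rewrite !app_nth2 by lia. destruct (j - 1 - length h)%nat eqn:E; [lia|]. auto. Qed.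

Lemma pp_swap K et l d u h b b' rest c : (u < S (length h) + d (S (length h)))%nat ->
  pp K et l d u (Aof (h ++ b :: rest)) c = pp K et l d u (Aof (h ++ b' :: rest)) c.
Proof. intros H. apply pp_agree. intros j Hj Hj'. apply Aof_swap; [|lia]. intros E. subst j. lia. Qed.

Lemma E_rho K et l d T n i : (1 <= K)%nat -> (n < T)%nat -> (i < n)%nat -> (n <= i + d (S i))%nat ->
  (forall t c, (1 <= t)%nat -> (c < K)%nat -> 0 <= l t c <= 1) ->
  Ex K (PP K et l d) T [] (fun g => rho K et l d n (Aof g) (S i)) <= 1.
Proof.
  intros HK HT Hi Hn Hl.
  set (P := PP K et l d).
  assert (HP : forall h a, (a < K)%nat -> 0 <= P h a) by (intros; apply PP_nonneg; auto).
  assert (HS : forall h, sumR K (P h) = 1) by (intros; apply PP_sum; auto).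
  set (F := fun g => rho K et l d n (Aof g) (S i)).
  replace T with (i + S (T - S i))%nat by lia. rewrite Ex_tower.
  rewrite <- (Ex_const K P i [] 1) by auto.
  apply Ex_le; auto. intros h Hh. change ([] ++ h) with h.
  cbn [Ex].
  assert (E1 : forall b, (b < K)%nat -> P h b * Ex K P (T - S i) (h ++ [b]) F =
     l (S i) b * Ex K P (n - S i) (h ++ [0%nat]) (fun g => pp K et l d n (Aof g) b)).
  { intros b Hb.
    replace (T - S i)%nat with ((n - S i) + (T - n))%nat by lia. rewrite Ex_tower.
    rewrite (Ex_ext K P (n - S i) (h ++ [b]) _ F).
    2:{ intros rest Hr. apply (Ex_stable K P _ _ n); auto.
        - intros g Hg a. unfold F. apply rho_prefix; lia.
        - rewrite !length_app; simpl; lia. }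
    rewrite (Ex_ext K P (n - S i) (h ++ [b]) F (fun g => (l (S i) b / P h b) * pp K et l d n (Aof g) b)).
    2:{ intros rest Hr. unfold F. rewrite rho_eq. rewrite <- app_assoc. simpl app.
        replace (S i) with (S (length h)) by lia. rewrite Aof_last.
        destruct (Nat.ltb_spec b K); [|lia].
        replace (S (length h) - 1)%nat with (length h) by lia.
        rewrite (pp_prefix K et l d (length h) h (b :: rest)) by lia. unfold P, PP.
        pose proof (pp_pos K et l d (length h) (Aof h) b HK). field. lra. }
    rewrite Ex_scal. rewrite <- Rmult_assoc.
    replace (P h b * (l (S i) b / P h b)) with (l (S i) b)
      by (unfold P, PP; pose proof (pp_pos K et l d (length h) (Aof h) b HK); field; lra).
    f_equal. apply Ex_swap.
    - intros rest Hr a Ha. unfold P, PP. rewrite <- !app_assoc. simpl app. rewrite !length_app. simpl length.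
      apply pp_swap. rewrite Hh. lia.
    - intros rest Hr. rewrite <- !app_assoc. simpl app. apply pp_swap. rewrite Hh. lia. }
  rewrite (sumR_ext K _ _ E1).
  rewrite (sumR_ext K _ (fun b => Ex K P (n - S i) (h ++ [0%nat]) (fun g => l (S i) b * pp K et l d n (Aof g) b)))
    by (intros; rewrite Ex_scal; auto).
  rewrite <- (Ex_sumR K P (n - S i) (h ++ [0%nat]) K (fun b g => l (S i) b * pp K et l d n (Aof g) b)). rewrite <- (Ex_const K P (n - S i) (h ++ [0%nat]) 1) by auto.
  apply Ex_le; auto. intros rest _.
  rewrite <- (pp_sum K et l d n (Aof ((h ++ [0%nat]) ++ rest)) HK). apply sumR_le. intros b Hb.
  pose proof (pp_pos K et l d n (Aof ((h ++ [0%nat]) ++ rest)) b HK). specialize (Hl (S i) b ltac:(lia) Hb).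
  nra.
Qed.

From Coquelicot Require Import Coquelicot.
Import ListNotations.
Open Scope R_scope.

Lemma exp_neg_quad x : 0 <= x -> exp (- x) <= 1 - x + x^2/2.
Proof.
  intros Hx.
  set (f := fun y => exp y * (1 - y + y^2/2)).
  assert (Hd : forall y, derivable_pt_lim f y (exp y * (y^2/2))).
  { intros y. apply is_derive_Reals. unfold f. auto_derive. auto. simpl. field. }
  assert (Hi : increasing f).
  { apply (nonneg_derivative_1 f (fun y => exist _ _ (Hd y))). intros y.
    simpl. apply Rmult_le_pos. apply Rlt_le, exp_pos. nra. }
  specialize (Hi 0 x Hx). unfold f in Hi. rewrite exp_0 in Hi.
  assert (E : exp (-x) * exp x = 1) by (rewrite <- exp_plus; replace (-x+x) with 0 by ring; apply exp_0).
  assert (0 < exp (-x)) by apply exp_pos.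
  nra.
Qed.

Lemma hedge K et l d A T a : (1 <= K)%nat -> 0 < et -> (a < K)%nat ->
  (forall n c, (c < K)%nat -> 0 <= hat K et l d A (S n) c) ->
  sumR T (fun n => sumR K (fun c => qq K et l d n A c * hat K et l d A (S n) c))
  - Lf K et l d A T a <=
  ln (INR K) / et + et / 2 * sumR T (fun n => sumR K (fun c => qq K et l d n A c * (hat K et l d A (S n) c) ^ 2)).
Proof.
  intros HK Het Ha Hv.
  set (G := fun n => sumR K (fun c => qq K et l d n A c * hat K et l d A (S n) c)).
  set (H := fun n => sumR K (fun c => qq K et l d n A c * (hat K et l d A (S n) c) ^ 2)).
  set (W := fun n => sumR K (fun c => exp (- et * Lf K et l d A n c))).
  assert (Wpos : forall n, 0 < W n) by (intros; apply sumR_exp_pos; auto).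
  assert (Claim : forall n, W n <= INR K * exp (sumR n (fun j => - et * G j + et ^ 2 / 2 * H j))).
  { induction n.
    - simpl. rewrite exp_0. unfold W, Lf. simpl.
      rewrite (sumR_ext K _ (fun _ => 1)) by (intros; replace (- et * 0) with 0 by ring; apply exp_0).
      rewrite sumR_const. lra.
    - assert (E : W (S n) = W n * sumR K (fun c => qq K et l d n A c * exp (- et * hat K et l d A (S n) c))).
      { unfold W, qq, ew. rewrite <- sumR_scal. apply sumR_ext. intros c _. unfold Lf. simpl.
        replace (- et * (sumR n (fun i => hat K et l d A (S i) c) + hat K et l d A (S n) c)) with
          (- et * sumR n (fun i => hat K et l d A (S i) c) + - et * hat K et l d A (S n) c) by ring.
        rewrite exp_plus. field. apply Rgt_not_eq. apply (Wpos n). }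
      assert (B : sumR K (fun c => qq K et l d n A c * exp (- et * hat K et l d A (S n) c)) <= 1 - et * G n + et ^ 2 / 2 * H n).
      { unfold G, H. rewrite <- (ew_sum K et (Lf K et l d A n) HK).
        rewrite <- !sumR_scal, <- sumR_minus, <- sumR_plus. apply sumR_le. intros c Hc.
        unfold qq. pose proof (ew_pos K et (Lf K et l d A n) c HK).
        pose proof (exp_neg_quad (et * hat K et l d A (S n) c) ltac:(apply Rmult_le_pos; [lra|apply Hv; auto])).
        replace (- (et * hat K et l d A (S n) c)) with (- et * hat K et l d A (S n) c) in H1 by ring.
        set (q := ew K et (Lf K et l d A n) c) in *. set (v := hat K et l d A (S n) c) in *.
        assert (q * exp (- et * v) <= q * (1 - et * v + (et * v) ^ 2 / 2)) by (apply Rmult_le_compat_l; lra).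
        nra. }
      pose proof (exp_ineq1_le (- et * G n + et ^ 2 / 2 * H n)).
      change (sumR (S n) ?f) with (sumR n f + f n). rewrite exp_plus. rewrite E.
      assert (0 <= sumR K (fun c => qq K et l d n A c * exp (- et * hat K et l d A (S n) c))).
      { apply sumR_nonneg. intros. apply Rmult_le_pos. apply Rlt_le, ew_pos; auto. apply Rlt_le, exp_pos. }
      pose proof (Wpos n). pose proof (exp_pos (sumR n (fun j => - et * G j + et ^ 2 / 2 * H j))).
      apply Rle_trans with (INR K * exp (sumR n (fun j => - et * G j + et ^ 2 / 2 * H j)) *
          sumR K (fun c => qq K et l d n A c * exp (- et * hat K et l d A (S n) c))).
      + apply Rmult_le_compat_r; lra.
      + rewrite Rmult_assoc. apply Rmult_le_compat_l. apply pos_INR. apply Rmult_le_compat_l. apply Rlt_le, exp_pos. lra. }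
  specialize (Claim T).
  assert (Ea : exp (- et * Lf K et l d A T a) <= W T).
  { unfold W. apply (sumR_le_term K (fun c => exp (- et * Lf K et l d A T c))); auto. intros; apply Rlt_le, exp_pos. }
  set (S0 := sumR T (fun j => - et * G j + et ^ 2 / 2 * H j)) in *.
  assert (HKpos : 0 < INR K) by (apply lt_0_INR; lia).
  assert (L1 : - et * Lf K et l d A T a <= ln (INR K) + S0).
  { destruct (Rle_dec (- et * Lf K et l d A T a) (ln (INR K) + S0)); auto.
    exfalso. assert (exp (ln (INR K) + S0) < exp (- et * Lf K et l d A T a)) by (apply exp_increasing; lra).
    rewrite exp_plus, exp_ln in H0 by auto. lra. }
  unfold S0 in L1. rewrite sumR_plus, sumR_scal, sumR_scal in L1.
  fold G H. apply (Rmult_le_reg_l et); auto.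
  replace (et * (ln (INR K) / et + et / 2 * sumR T H)) with (ln (INR K) + et ^ 2 / 2 * sumR T H) by (field; lra).
  replace (sumR T (fun j => et ^ 2 / 2 * H j)) with (et ^ 2 / 2 * sumR T H) in L1 by (rewrite sumR_scal; auto).
  lra.
Qed.

Lemma count_delay d T :
  sumR T (fun n => sumR n (fun i => if (S i + d (S i) <=? n)%nat then 0 else 1)) <=
  sumR T (fun i => INR (Nat.min (d (S i)) (T - S i))).
Proof.
  induction T.
  - simpl. lra.
  - change (sumR (S T) ?f) with (sumR T f + f T).
    rewrite (sumR_ext T (fun i => INR (Nat.min (d (S i)) (S T - S i)))
       (fun i => INR (Nat.min (d (S i)) (T - S i)) + (if (S i + d (S i) <=? T)%nat then 0 else 1))).
    + rewrite sumR_plus. cbv beta.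
      replace (INR (Nat.min (d (S T)) (S T - S T))) with 0 by (rewrite Nat.sub_diag, Nat.min_0_r; auto). lra.
    + intros i Hi. destruct (Nat.leb_spec (S i + d (S i)) T).
      * rewrite Rplus_0_r. f_equal. lia.
      * replace (Nat.min (d (S i)) (S T - S i)) with (S (Nat.min (d (S i)) (T - S i))) by lia.
        rewrite S_INR. auto.
Qed.

Lemma count_delay2 d T :
  sumR T (fun n => sumR n (fun i => if (S i + d (S i) <=? n)%nat then 0 else 1)) <= total_delay T d.
Proof. eapply Rle_trans. apply count_delay. unfold total_delay. apply sumR_le. intros. apply le_INR. lia. Qed.

Lemma core K T l d dmax et a : (1 <= K)%nat -> 0 < et -> (a < K)%nat ->
  (forall t c, (1 <= t)%nat -> (c < K)%nat -> 0 <= l t c <= 1) ->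
  (forall t, (1 <= t)%nat -> INR (d t) <= dmax) ->
  et * (4 * exp 1 * dmax) <= 1 ->
  Ex K (PP K et l d) T [] (fun g => sumR T (fun n => l (S n) (nth n g 0%nat))) - cum_loss T l a
  <= ln (INR K) / et + et * (INR K * INR T * exp 1 / 2 + total_delay T d).
Proof.
  intros HK Het Ha Hl Hd Hc.
  set (P := PP K et l d).
  assert (HP : forall h a, (a < K)%nat -> 0 <= P h a) by (intros; apply PP_nonneg; auto).
  assert (HS : forall h, sumR K (P h) = 1) by (intros; apply PP_sum; auto).
  set (E := Ex K P T []).
  set (Gpp := fun n g => sumR K (fun b => pp K et l d n (Aof g) b * l (S n) b)).
  set (Gql := fun n g => sumR K (fun b => qq K et l d n (Aof g) b * l (S n) b)).
  set (Gqh := fun n g => sumR K (fun b => qq K et l d n (Aof g) b * hat K et l d (Aof g) (S n) b)).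
  set (Gqh2 := fun n g => sumR K (fun b => qq K et l d n (Aof g) b * (hat K et l d (Aof g) (S n) b) ^ 2)).
  set (Y := fun n g => Yout K et l d n (Aof g)).
  assert (S1 : E (fun g => sumR T (fun n => l (S n) (nth n g 0%nat))) = sumR T (fun n => E (Gpp n))).
  { unfold E. rewrite Ex_sumR. apply sumR_ext. intros n Hn. apply E_loss; auto. }
  assert (S2 : forall n, E (Gpp n) <= E (Gql n) + et * E (Y n)).
  { intros n. unfold E. rewrite <- Ex_scal, <- Ex_plus. apply Ex_le; auto. intros rest _.
    unfold Gpp, Gql, Y. pose proof (drift K et l d n (Aof ([] ++ rest)) HK Het Hl).
    rewrite (sumR_ext K _ (fun b => pp K et l d n (Aof ([] ++ rest)) b * l (S n) b - qq K et l d n (Aof ([] ++ rest)) b * l (S n) b)) in H by (intros; ring).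
    rewrite sumR_minus in H. lra. }
  assert (S3 : forall n, (n < T)%nat -> E (Gql n) = E (Gqh n)).
  { intros n Hn. symmetry. apply E_qq; auto. }
  assert (S4 : E (fun g => sumR T (fun n => Gqh n g)) <=
      E (fun g => Lf K et l d (Aof g) T a) + ln (INR K) / et + et / 2 * E (fun g => sumR T (fun n => Gqh2 n g))).
  { unfold E. rewrite <- Ex_scal.
    rewrite <- (Ex_const K P T [] (ln (INR K) / et)) by auto.
    rewrite <- !Ex_plus. apply Ex_le; auto. intros rest _.
    pose proof (hedge K et l d (Aof ([] ++ rest)) T a HK Het Ha) as H.
    unfold Gqh, Gqh2. cbv beta.
    assert (Hv : forall n c, (c < K)%nat -> 0 <= hat K et l d (Aof ([] ++ rest)) (S n) c).
    { intros. apply hat_nonneg; auto. apply Hl; auto; lia. }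
    specialize (H Hv). lra. }
  assert (S5 : E (fun g => Lf K et l d (Aof g) T a) = cum_loss T l a).
  { unfold E, Lf. rewrite Ex_sumR. unfold cum_loss. apply sumR_ext. intros n Hn. apply E_hat; auto. }
  assert (S6 : E (fun g => sumR T (fun n => Gqh2 n g)) <= INR T * (INR K * exp 1)).
  { unfold E. rewrite Ex_sumR. rewrite <- sumR_const. apply sumR_le. intros n Hn.
    apply (E_var K et l d dmax); auto. }
  assert (S7 : forall n, (n < T)%nat -> E (Y n) <= sumR n (fun i => if (S i + d (S i) <=? n)%nat then 0 else 1)).
  { intros n Hn. unfold E, Y, Yout. rewrite Ex_sumR. apply sumR_le. intros i Hi.
    destruct (Nat.leb_spec (S i + d (S i)) n).
    - rewrite Ex_const by auto. lra.
    - apply E_rho; auto; lia. }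
  assert (S8 : sumR T (fun n => E (Gqh n)) = E (fun g => sumR T (fun n => Gqh n g))).
  { unfold E. rewrite Ex_sumR. auto. }
  pose proof (count_delay2 d T) as C.
  assert (S9 : sumR T (fun n => E (Gpp n)) <= sumR T (fun n => E (Gqh n)) + et * sumR T (fun n => sumR n (fun i => if (S i + d (S i) <=? n)%nat then 0 else 1))).
  { rewrite <- sumR_scal, <- sumR_plus. apply sumR_le. intros n Hn.
    specialize (S2 n). rewrite S3 in S2 by auto. specialize (S7 n Hn).
    assert (et * E (Y n) <= et * sumR n (fun i => if (S i + d (S i) <=? n)%nat then 0 else 1)) by (apply Rmult_le_compat_l; lra).
    lra. }
  rewrite S1. rewrite S8 in S9. rewrite S5 in S4.
  assert (et / 2 * E (fun g => sumR T (fun n => Gqh2 n g)) <= et / 2 * (INR T * (INR K * exp 1))) by (apply Rmult_le_compat_l; lra).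
  assert (et * sumR T (fun n => sumR n (fun i => if (S i + d (S i) <=? n)%nat then 0 else 1)) <= et * total_delay T d) by (apply Rmult_le_compat_l; lra).
  lra.
Qed.

Lemma part1 (K T : nat) (l : nat -> nat -> R) (d : nat -> nat) (dmax : R)
  (hK : (2 <= K)%nat)
  (hl : forall t a, (1 <= t)%nat -> (a < K)%nat -> 0 <= l t a <= 1)
  (hd : forall t, (1 <= t)%nat -> INR (d t) <= dmax) :
  forall eta : R, 0 < eta ->
     forall a, (a < K)%nat ->
       dew_expected_loss K T eta dmax l d - cum_loss T l a <=
         Rmax (ln (INR K) / eta) (4 * exp 1 * dmax * ln (INR K))
         + eta * (INR K * INR T * exp 1 / 2 + total_delay T d).
Proof.
  intros eta Heta a Ha.
  assert (HK : (1 <= K)%nat) by lia.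
  set (et := eta_prime eta dmax).
  assert (Hpe : 0 < exp 1) by apply exp_pos.
  assert (Hdm : 0 <= dmax) by (pose proof (hd 1%nat ltac:(lia)); pose proof (pos_INR (d 1%nat)); lra).
  assert (F : 0 < et /\ et <= eta /\ et * (4 * exp 1 * dmax) <= 1 /\
              ln (INR K) / et <= Rmax (ln (INR K) / eta) (4 * exp 1 * dmax * ln (INR K))).
  { unfold et, eta_prime. destruct (Rle_dec (eta * (4 * exp 1 * dmax)) 1).
    - repeat split; auto; try lra. apply Rmax_l.
    - assert (0 < 4 * exp 1 * dmax) by (destruct (Rle_dec (4 * exp 1 * dmax) 0); [|lra]; exfalso; apply n; nra).
      repeat split.
      + apply Rinv_0_lt_compat; auto.
      + apply Rmult_le_reg_r with (4 * exp 1 * dmax); auto. rewrite Rinv_l by lra. lra.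
      + rewrite Rinv_l by lra. lra.
      + eapply Rle_trans; [|apply Rmax_r]. right. assert (0 < dmax) by nra. field. split; lra. }
  destruct F as [Het [Hle [Hc Hmax]]].
  unfold dew_expected_loss. rewrite exp_loss_Ex by auto. fold et.
  rewrite (Ex_ext K _ T [] _ (fun g => sumR T (fun n => l (S n) (nth n g 0%nat)))) by (intros; simpl; auto).
  pose proof (core K T l d dmax et a HK Het Ha hl hd Hc) as H.
  assert (0 <= INR K * INR T * exp 1 / 2 + total_delay T d).
  { unfold total_delay. pose proof (pos_INR K). pose proof (pos_INR T).
    assert (0 <= sumR T (fun i => INR (d (S i)))) by (apply sumR_nonneg; intros; apply pos_INR). assert (0 <= INR K * INR T) by (apply Rmult_le_pos; lra). assert (0 <= INR K * INR T * exp 1) by (apply Rmult_le_pos; lra). lra. }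
  assert (et * (INR K * INR T * exp 1 / 2 + total_delay T d) <= eta * (INR K * INR T * exp 1 / 2 + total_delay T d))
    by (apply Rmult_le_compat_r; lra).
  lra.
Qed.

Theorem theorem1 (K T : nat) (l : nat -> nat -> R) (d : nat -> nat) (dmax : R)
  (hK : (2 <= K)%nat) (hT : (1 <= T)%nat)
  (hl : forall t a, (1 <= t)%nat -> (a < K)%nat -> 0 <= l t a <= 1)
  (hd : forall t, (1 <= t)%nat -> INR (d t) <= dmax) :
  (forall eta : R, 0 < eta ->
     forall a, (a < K)%nat ->
       dew_expected_loss K T eta dmax l d - cum_loss T l a <=
         Rmax (ln (INR K) / eta) (4 * exp 1 * dmax * ln (INR K))
         + eta * (INR K * INR T * exp 1 / 2 + total_delay T d))
  /\
  (forall eta : R,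
     eta = sqrt (ln (INR K) / (INR K * INR T * exp 1 / 2 + total_delay T d)) ->
     eta * (4 * exp 1 * dmax) <= 1 ->
     forall a, (a < K)%nat ->
       dew_expected_loss K T eta dmax l d - cum_loss T l a <=
         2 * sqrt ((INR K * INR T * exp 1 / 2 + total_delay T d) * ln (INR K))).
Proof.
  split. { apply part1; auto. }
  intros eta Heq Hc a Ha.
  set (X := INR K * INR T * exp 1 / 2 + total_delay T d) in *.
  assert (HlnK : 0 < ln (INR K)).
  { rewrite <- ln_1. apply ln_increasing; [lra|]. apply lt_1_INR. lia. }
  assert (HX : 0 < X).
  { unfold X, total_delay. assert (1 <= INR K) by (apply (le_INR 1); lia).
    assert (1 <= INR T) by (apply (le_INR 1); lia). pose proof (exp_pos 1).
    assert (0 <= sumR T (fun i => INR (d (S i)))) by (apply sumR_nonneg; intros; apply pos_INR).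
    assert (0 < INR K * INR T * exp 1) by (apply Rmult_lt_0_compat; [nra|lra]). lra. }
  assert (Heta : 0 < eta) by (rewrite Heq; apply sqrt_lt_R0; apply Rdiv_lt_0_compat; auto).
  pose proof (part1 K T l d dmax hK hl hd eta Heta a Ha) as H. fold X in H.
  rewrite Rmax_left in H.
  2:{ apply Rmult_le_reg_r with eta; auto. replace (ln (INR K) / eta * eta) with (ln (INR K)) by (field; lra). nra. }
  assert (E : sqrt (X * ln (INR K)) = X * eta).
  { rewrite Heq. replace (X * ln (INR K)) with ((X * X) * (ln (INR K) / X)) by (field; lra).
    assert (0 <= X * X) by nra. assert (0 <= ln (INR K) / X) by (apply Rlt_le, Rdiv_lt_0_compat; lra). rewrite sqrt_mult by auto.
    rewrite sqrt_square by lra. auto. }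
  rewrite E.
  assert (E2 : eta * eta = ln (INR K) / X) by (rewrite Heq; apply sqrt_sqrt; apply Rlt_le, Rdiv_lt_0_compat; auto).
  replace (ln (INR K) / eta) with (X * eta) in H.
  - lra.
  - replace (ln (INR K)) with (X * (eta * eta)) by (rewrite E2; field; lra). field. lra.
Qed.
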